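(* For MLAPD on a path of depth $D$ (a path graph with $D$ nodes whose root is an endpoint), the online algorithm \textsc{Double} is $(4-2^{1-\frac{D}{2}})$-competitive.
   Context: MLAPD: an instance is a rooted tree $\mathcal{T}$ with root $r$ and positive node costs $c(v)>0$, together with requests $\rho=(v,a,d)$ (node, arrival time, deadline $d\ge a$; deadlines distinct). A service $(S,t)$ is a subtree $S\ni r$ transmitted at time $t$, costing $c(S)=\sum_{u\in S}c(u)$; it satisfies $(v,a,d)$ if $v\in S$ and $a\le t\le d$. A feasible schedule satisfies every request; its cost is the sum of service costs. Online: requests revealed at arrival. $c$-competitive: cost at most $c$ times optimal on every instance. For request $\rho$ at $v$, $P_\rho$ is the $r$–$v$ path node set; $c(r\to\gamma\mid S)=c(P_\gamma\setminus S)$. A request is pending at time $t$ if it has arrived by $t$ and was not satisfied earlier. \textsc{Double}: when a pending request $\rho$ reaches its deadline $d_\rho$, set $S=P_\rho$; repeat: if no pending request is unsatisfied by $S$ stop; else let $\gamma$ be the pending request of earliest deadline not satisfied by $S$; if $c(S)+c(r\to\gamma\mid S)>2c(P_\rho)$ stop, else $S\gets S\cup P_\gamma$. Transmit $(S,d_\rho)$. *)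

(* Defs.v *)
From HB Require Import structures.
From mathcomp Require Import all_boot all_order all_algebra.
From mathcomp Require Import reals exp.
Set Implicit Arguments. Unset Strict Implicit. Unset Printing Implicit Defensive.
Import Order.TTheory GRing.Theory Num.Theory.
Local Open Scope ring_scope.

(* MLAPD on a path with D nodes 0,1,...,D-1; node 0 is the root (an endpoint)
   and the parent of node u > 0 is u-1.  Nodes are the ordinals 'I_D. *)

Record request (D : nat) (R : Type) := Request {
  rnode : 'I_D ; rarr : R ; rdl : R }.

Definition req_to (D : nat) (R : Type) (r : request D R) : 'I_D * R * R :=
  (rnode r, rarr r, rdl r).
Definition of_req (D : nat) (R : Type) (x : 'I_D * R * R) : request D R :=
  Request x.1.1 x.1.2 x.2.
Lemma req_toK (D : nat) (R : Type) : cancel (@req_to D R) (@of_req D R).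
Proof. by case. Qed.
HB.instance Definition _ (D : nat) (R : realType) :=
  Equality.copy (request D R) (can_type (@req_toK D R)).

Definition service (D : nat) (R : Type) := ({set 'I_D} * R)%type.

Definition pathset (D : nat) (v : 'I_D) : {set 'I_D} := [set u : 'I_D | u <= v]%N.

Definition setcost (R : realType) (D : nat) (c : 'I_D -> R) (S : {set 'I_D}) : R :=
  \sum_(u in S) c u.

Definition rooted_subtree (D : nat) (S : {set 'I_D}) : bool :=
  (S != set0) && [forall u in S, forall w : 'I_D, (w <= u)%N ==> (w \in S)].

Definition satisfies (R : realType) (D : nat) (s : service D R) (rho : request D R) : bool :=
  (rnode rho \in s.1) && (rarr rho <= s.2 <= rdl rho).

Definition feasible (R : realType) (D : nat) (reqs : seq (request D R))
    (sched : seq (service D R)) : Prop :=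
  (forall s, s \in sched -> rooted_subtree s.1) /\
  (forall rho, rho \in reqs -> exists2 s, s \in sched & satisfies s rho).

Definition sched_cost (R : realType) (D : nat) (c : 'I_D -> R) (sched : seq (service D R)) : R :=
  \sum_(s <- sched) setcost c s.1.

Definition valid_instance (R : realType) (D : nat) (c : 'I_D -> R) (reqs : seq (request D R)) : Prop :=
  (forall u, 0 < c u) /\
  (forall rho, rho \in reqs -> rarr rho <= rdl rho) /\
  uniq [seq rdl rho | rho <- reqs].

(* The set of satisfied requests is recorded by their deadlines (which are distinct). *)

Definition sortdl (R : realType) (D : nat) (reqs : seq (request D R)) : seq (request D R) :=
  sort (fun r1 r2 : request D R => rdl r1 <= rdl r2) reqs.

Definition pending (R : realType) (D : nat) (t : R) (sat : seq R) (rho : request D R) : bool :=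
  (rarr rho <= t) && (rdl rho \notin sat).

(* L is sorted by deadline, so the first pending request
   of L not satisfied by S is the one of earliest deadline.  [budget] = c(P_rho).
   Each iteration adds the path of a new request (which is then satisfied by S),
   so [size L] iterations of fuel always suffice for the loop to stop by itself. *)
Fixpoint grow (R : realType) (D : nat) (c : 'I_D -> R) (t : R) (sat : seq R)
    (L : seq (request D R)) (budget : R) (fuel : nat) (S : {set 'I_D}) : {set 'I_D} :=
  match fuel with
  | 0 => S
  | fuel'.+1 =>
    match [seq g <- L | pending t sat g && (rnode g \notin S)] with
    | [::] => S
    | g :: _ =>
      if setcost c S + setcost c (pathset (rnode g) :\: S) > 2 * budget then S
      else grow c t sat L budget fuel' (S :|: pathset (rnode g))
    end
  end.

Definition double_step (R : realType) (D : nat) (c : 'I_D -> R) (L : seq (request D R))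
    (st : seq R * seq (service D R)) (rho : request D R) : seq R * seq (service D R) :=
  let: (sat, sched) := st in
  let t := rdl rho in
  if ~~ pending t sat rho then (sat, sched)
  else
    let P := pathset (rnode rho) in
    let S := grow c t sat L (setcost c P) (size L) P in
    (sat ++ [seq rdl g | g <- L & pending t sat g && (rnode g \in S)],
     rcons sched (S, t)).

Definition Double (R : realType) (D : nat) (c : 'I_D -> R) (reqs : seq (request D R))
    : seq (service D R) :=
  let L := sortdl reqs in (foldl (double_step c L) ([::], [::]) L).2.

(* An algorithm [alg] (mapping costs and requests to a schedule) is r-competitive on
   paths with D nodes: on every valid instance its schedule is feasible and costs at most
   r times the cost of any feasible schedule (equivalently, r times the optimum). *)
Definition competitive (R : realType) (D : nat)
    (alg : ('I_D -> R) -> seq (request D R) -> seq (service D R)) (r : R) : Prop :=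
  forall (c : 'I_D -> R) (reqs : seq (request D R)),
    valid_instance c reqs ->
    feasible reqs (alg c reqs) /\
    forall opt : seq (service D R), feasible reqs opt ->
      sched_cost c (alg c reqs) <= r * sched_cost c opt.

(* Main.v *)
Require Import Defs.
From HB Require Import structures.
From mathcomp Require Import all_boot all_order all_algebra.
From mathcomp Require Import reals exp.
From mathcomp Require Import ring lra zify.
Import Order.TTheory GRing.Theory Num.Theory.
Set Implicit Arguments. Unset Strict Implicit. Unset Printing Implicit Defensive.
Local Open Scope ring_scope.

Lemma count_lt (T : eqType) (p q : pred T) (s : seq T) (x : T) :
  (forall y, q y -> p y) -> x \in s -> p x -> ~~ q x -> (count q s < count p s)%N.
Proof.
move=> qp; elim: s => //= y s IH; rewrite in_cons => /orP [/eqP <-|xs] px nqx.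
  rewrite px (negbTE nqx) add0n add1n ltnS.
  by apply: sub_count => z /qp.
have := IH xs px nqx.
case: (boolP (q y)) => [/qp -> | _]; case: (p y) => /=; lia.
Qed.

Lemma find_step (P : nat -> bool) a N : (a <= N)%N -> ~~ P a -> P N ->
  exists e, [/\ (a <= e)%N, (e < N)%N, ~~ P e & P e.+1].
Proof.
elim: N => [|N IH] aN nPa PN; first by move: aN; rewrite leqn0 => /eqP Ea; move: nPa; rewrite Ea PN.
have aN' : (a <= N)%N.
  by move: aN; rewrite leq_eqVlt => /orP [/eqP Ea|//]; move: nPa; rewrite Ea PN.
case: (boolP (P N)) => PN'.
  by have [e [ae eN nPe Pe]] := IH aN' nPa PN'; exists e; split => //; lia.
by exists N; split.
Qed.

Section Path.
Variables (R : realType) (D : nat) (c : 'I_D -> R).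
Hypothesis cpos : forall u, 0 < c u.

Lemma in_pathset (u v : 'I_D) : (u \in pathset v) = (u <= v)%N.
Proof. by rewrite inE. Qed.

Lemma pathset_sub (a b : 'I_D) : (a <= b)%N -> pathset a \subset pathset b.
Proof. move=> ab; apply/subsetP => u; rewrite !in_pathset => ua; lia. Qed.

Lemma pathsetU (a b : 'I_D) : (a <= b)%N -> pathset a :|: pathset b = pathset b.
Proof. by move=> ab; apply/setUidPr; apply: pathset_sub. Qed.

Lemma setcost_ge0 S : 0 <= setcost c S.
Proof. by apply: sumr_ge0 => u _; apply: ltW. Qed.

Lemma setcost_split (S P : {set 'I_D}) : S \subset P ->
  setcost c P = setcost c S + setcost c (P :\: S).
Proof.
move=> SP; rewrite /setcost (big_setID S) /=.
by have -> : P :&: S = S by apply/setIidPr.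
Qed.

Lemma setcost_sub (S P : {set 'I_D}) : S \subset P -> setcost c S <= setcost c P.
Proof. by move=> SP; rewrite (setcost_split SP) lerDl setcost_ge0. Qed.

Lemma C_lt (a b : 'I_D) : (a < b)%N -> setcost c (pathset a) < setcost c (pathset b).
Proof.
move=> ab; rewrite (setcost_split (pathset_sub (ltnW ab))) ltrDl.
have bin : b \in pathset b :\: pathset a by rewrite !inE leqnn andbT -ltnNge.
rewrite /setcost (bigD1 b bin) /=.
by apply: ltr_pwDl => //; apply: sumr_ge0 => u _; apply: ltW.
Qed.

Lemma C_le (a b : 'I_D) : (a <= b)%N -> setcost c (pathset a) <= setcost c (pathset b).
Proof. by move=> ab; apply: setcost_sub; apply: pathset_sub. Qed.

Lemma rooted_pathset (m : 'I_D) : rooted_subtree (pathset m).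
Proof.
apply/andP; split.
  by apply/set0Pn; exists m; rewrite in_pathset.
apply/forallP => u; apply/implyP; rewrite in_pathset => um.
apply/forallP => w; apply/implyP => wu; rewrite in_pathset; lia.
Qed.

Lemma rooted_C (S : {set 'I_D}) (v : 'I_D) : rooted_subtree S -> v \in S ->
  setcost c (pathset v) <= setcost c S.
Proof.
move=> /andP [_ /forallP cl] vS; apply: setcost_sub; apply/subsetP => w.
rewrite in_pathset => wv.
by have := cl v; rewrite vS /= => /forallP /(_ w); rewrite wv.
Qed.

End Path.

Section Grow.
Variables (R : realType) (D : nat) (c : 'I_D -> R).
Hypothesis cpos : forall u, 0 < c u.
Variable L : seq (request D R).
Hypothesis Ls : sorted (fun r1 r2 : request D R => rdl r1 <= rdl r2) L.

Lemma grow_spec t sat B fuel (v : 'I_D) :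
  setcost c (pathset v) <= 2 * B ->
  (count (fun g => pending t sat g && (rnode g \notin pathset v)) L <= fuel)%N ->
  exists m : 'I_D, [/\ grow c t sat L B fuel (pathset v) = pathset m, (v <= m)%N,
    setcost c (pathset m) <= 2 * B &
    forall h, h \in L -> pending t sat h -> (m < rnode h)%N ->
      exists2 g, g \in L & [/\ pending t sat g, (m < rnode g)%N,
         2 * B < setcost c (pathset (rnode g)) & rdl g <= rdl h]].
Proof.
have notin (u w : 'I_D) : (u \notin pathset w) = (w < u)%N by rewrite in_pathset -ltnNge.
elim: fuel v => [|f IH] v Cv cnt /=.
  exists v; split => // h hL ph vh.
  have : has (fun g => pending t sat g && (rnode g \notin pathset v)) L.
    by apply/hasP; exists h => //; rewrite ph notin.
  by rewrite has_count; move: cnt; rewrite leqn0 => /eqP ->.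
case E: [seq g <- L | pending t sat g && (rnode g \notin pathset v)] => [|g rest].
  exists v; split => // h hL ph vh.
  have : h \in [seq g <- L | pending t sat g && (rnode g \notin pathset v)].
    by rewrite mem_filter ph notin vh.
  by rewrite E.
have : g \in [seq g <- L | pending t sat g && (rnode g \notin pathset v)] by rewrite E mem_head.
rewrite mem_filter => /andP [/andP [pg]]; rewrite notin => vg gL.
have sp : setcost c (pathset v) + setcost c (pathset (rnode g) :\: pathset v)
   = setcost c (pathset (rnode g)).
  by rewrite (setcost_split c (pathset_sub (ltnW vg))).
rewrite sp.
case: ifP => cond.
  exists v; split => // h hL ph vh; exists g => //; split => //.
  have : h \in g :: rest.
    by rewrite -E mem_filter ph notin vh.
  rewrite in_cons => /orP [/eqP -> // | hr].
  have srt : sorted (fun r1 r2 : request D R => rdl r1 <= rdl r2) (g :: rest).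
    by rewrite -E; apply: sorted_filter => // x y z; apply: le_trans.
  have tr : transitive (fun r1 r2 : request D R => rdl r1 <= rdl r2).
    by move=> y x z; apply: le_trans.
  have := order_path_min tr srt.
  by move/allP/(_ h hr).
rewrite pathsetU ?(ltnW vg) //.
have Cg : setcost c (pathset (rnode g)) <= 2 * B by rewrite leNgt cond.
have cnt' : (count (fun g0 => pending t sat g0 && (rnode g0 \notin pathset (rnode g))) L <= f)%N.
  rewrite -ltnS; apply: leq_trans cnt; apply: (count_lt (x := g)) => //.
  - move=> y /andP [-> /=]; rewrite !notin => gy; lia.
  - by rewrite pg notin.
  - by rewrite notin ltnn andbF.
have [m [-> gm Cm Hm]] := IH (rnode g) Cg cnt'.
exists m; split => //; lia.
Qed.

End Grow.

Section Num.
Variable R : realType.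

Definition gg (v : nat) : R := 2 / 2 ^+ uphalf v.

Lemma gg_ge0 v : 0 <= gg v.
Proof. by rewrite /gg divr_ge0 // exprn_ge0. Qed.

Lemma gg_le2 v : gg v <= 2.
Proof.
rewrite /gg ler_pdivrMr ?exprn_gt0 // ler_peMr // exprn_ege1 //; lra.
Qed.

Lemma gg_anti v w : (v <= w)%N -> gg w <= gg v.
Proof.
move=> vw; rewrite /gg ler_pM2l // lef_pV2 ?posrE ?exprn_gt0 //.
rewrite ler_eXn2l; last by lra.
exact: uphalf_leq.
Qed.

Lemma gg_S2 v : gg v.+2 = gg v / 2.
Proof.
rewrite /gg (_ : uphalf v.+2 = (uphalf v).+1) ?exprS; last by [].
by rewrite invfM mulrA [RHS]mulrAC.
Qed.

Lemma gg_S1 v : 2 * gg v.+1 - gg v <= 1.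
Proof.
rewrite /gg.
have [e|o] := boolP (~~ odd v).
- have -> : uphalf v = v./2 by rewrite uphalf_half (negbTE e).
  have -> : uphalf v.+1 = (v./2).+1 by [].
  rewrite exprS.
  have h : (0 : R) < 2 ^+ v./2 by rewrite exprn_gt0.
  have -> : 2 * (2 / (2 * 2 ^+ v./2)) - 2 / 2 ^+ v./2 = 0 :> R.
    by field; rewrite gt_eqF.
  by [].
- rewrite negbK in o.
  have -> : uphalf v = (v./2).+1 by rewrite uphalf_half o.
  have -> : uphalf v.+1 = (v./2).+1 by [].
  set X := 2 ^+ (v./2).+1 : R.
  have h : (2 : R) <= X.
    rewrite /X exprS ler_peMr // ?exprn_ege1 //; lra.
  have : 2 / X <= 1.
    rewrite ler_pdivrMr ?mul1r; lra.
  lra.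
Qed.

Lemma gg_bound (D v : nat) : (v < D)%N -> 2 `^ (1 - D%:R / 2) <= gg v.
Proof.
move=> vD.
apply: (@le_trans _ _ (gg D.-1)); last by apply: gg_anti; lia.
rewrite /gg; have -> : uphalf D.-1 = D./2 by case: D vD => // n _; rewrite uphalfE.
have k2 : (D./2)%:R <= D%:R / 2 :> R.
  rewrite ler_pdivlMr // -natrM ler_nat.
  by rewrite -{2}(odd_double_half D) muln2 leq_addl.
apply: (@le_trans _ _ (2 `^ (1 - (D./2)%:R))).
  by apply: ler_powR => //; lra.
rewrite powRB; last by rewrite pnatr_eq0 implybT.
by rewrite powRr1 ?ler0n // powR_mulrn ?ler0n.
Qed.
End Num.

Section Alg.
Variables (R : realType) (D : nat) (c : 'I_D -> R) (reqs : seq (request D R)).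
Variable x0 : request D R.
Hypothesis cpos : forall u, 0 < c u.
Hypothesis arrdl : forall rho, rho \in reqs -> rarr rho <= rdl rho.
Hypothesis udl : uniq [seq rdl rho | rho <- reqs].

Local Notation L := (sortdl reqs).
Local Notation n := (size (sortdl reqs)).
Local Notation leT := (fun r1 r2 : request D R => rdl r1 <= rdl r2).

Definition r k := nth x0 L k.

Lemma memL g : (g \in L) = (g \in reqs).
Proof. exact: mem_sort. Qed.

Lemma Lsorted : sorted leT L.
Proof. by apply: sort_sorted => x y; apply: le_total. Qed.

Lemma Luniq : uniq [seq rdl g | g <- L].
Proof. by rewrite (perm_uniq (perm_map _ (permEl (perm_sort _ _)))). Qed.

Lemma rL k : (k < n)%N -> r k \in L.
Proof. by move=> kn; apply: mem_nth. Qed.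

Lemma dl_le a b : (a <= b)%N -> (b < n)%N -> rdl (r a) <= rdl (r b).
Proof.
move=> ab bn.
have tr : transitive leT by move=> y x z; apply: le_trans.
have rf : reflexive leT by move=> x /=.
by apply: (sorted_leq_nth tr rf x0 Lsorted) => //; rewrite inE /=; lia.
Qed.

Lemma dl_eq a b : (a < n)%N -> (b < n)%N -> rdl (r a) = rdl (r b) -> a = b.
Proof.
move=> an bn e; apply/eqP; rewrite -(nth_uniq (rdl x0) _ _ Luniq) ?size_map //.
by rewrite !(nth_map x0) // -/(r a) -/(r b) e.
Qed.

Lemma dl_lt a b : (a < b)%N -> (b < n)%N -> rdl (r a) < rdl (r b).
Proof.
move=> ab bn; rewrite lt_neqAle dl_le ?(ltnW ab) // andbT.
by apply/eqP => /dl_eq => /(_ (ltn_trans ab bn) bn) E; move: ab; rewrite E ltnn.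
Qed.

Lemma dl_lt_idx a b : (a < n)%N -> (b < n)%N -> rdl (r a) < rdl (r b) -> (a < b)%N.
Proof.
move=> an bn; case: (leqP b a) => // ba; rewrite ltNge dl_le //.
Qed.

Lemma idxL g : g \in L -> exists2 k, (k < n)%N & g = r k.
Proof. by move=> gL; exists (index g L); rewrite ?index_mem // /r nth_index. Qed.

Lemma dl_injL g h : g \in L -> h \in L -> rdl g = rdl h -> g = h.
Proof.
move=> /idxL [a an ->] /idxL [b bn ->] /dl_eq; by move=> /(_ an bn) ->.
Qed.

Definition st k := foldl (double_step c L) ([::], [::]) (take k L).
Definition sat k := (st k).1.
Definition sch k := (st k).2.
Definition trig k := pending (rdl (r k)) (sat k) (r k).
Definition Sm k := grow c (rdl (r k)) (sat k) L (setcost c (pathset (rnode (r k)))) n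
  (pathset (rnode (r k))).

Lemma st_step k : (k < n)%N -> st k.+1 = double_step c L (st k) (r k).
Proof. by move=> kn; rewrite /st (take_nth x0 kn) foldl_rcons. Qed.

Lemma sat_step k : (k < n)%N -> sat k.+1 = if trig k then
  sat k ++ [seq rdl g | g <- L & pending (rdl (r k)) (sat k) g && (rnode g \in Sm k)]
  else sat k.
Proof.
move=> kn; rewrite /trig /Sm /sat st_step //.
by case: (st k) => s1 s2; rewrite /double_step /=; case: (pending (rdl (r k)) s1 (r k)).
Qed.

Lemma sch_step k : (k < n)%N -> sch k.+1 = if trig k then rcons (sch k) (Sm k, rdl (r k))
  else sch k.
Proof.
move=> kn; rewrite /trig /Sm /sch /sat st_step //.
by case: (st k) => s1 s2; rewrite /double_step /=; case: (pending _ _ _).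
Qed.

Lemma sat_mono i j : (i <= j)%N -> (j <= n)%N -> {subset sat i <= sat j}.
Proof.
move=> ij; elim: j ij => [|j IH] ij jn x.
  by move: ij; rewrite leqn0 => /eqP ->.
move: ij; rewrite leq_eqVlt => /orP [/eqP -> //|]; rewrite ltnS => ij xi.
rewrite sat_step //; have := IH ij (ltnW jn) x xi.
by case: ifP => // _; rewrite mem_cat => ->.
Qed.

Lemma Sm_spec k : exists m : 'I_D, [/\ Sm k = pathset m, (rnode (r k) <= m)%N,
    setcost c (pathset m) <= 2 * setcost c (pathset (rnode (r k))) &
    forall h, h \in L -> pending (rdl (r k)) (sat k) h -> (m < rnode h)%N ->
      exists2 g, g \in L & [/\ pending (rdl (r k)) (sat k) g, (m < rnode g)%N,
         2 * setcost c (pathset (rnode (r k))) < setcost c (pathset (rnode g)) & rdl g <= rdl h]].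
Proof.
apply: (grow_spec Lsorted).
- by have := setcost_ge0 cpos (pathset (rnode (r k))); lra.
- exact: count_size.
Qed.

Lemma I2 k : (k <= n)%N -> forall j, (j < k)%N -> rdl (r j) \in sat k.
Proof.
elim: k => [//|k IH] kn j; rewrite ltnS leq_eqVlt => /orP [/eqP ->|jk]; last first.
  by apply: (sat_mono (leqnSn k) kn); apply: IH => //; lia.
rewrite sat_step //; case: ifP => tk.
  rewrite mem_cat; apply/orP; right; apply/mapP; exists (r k) => //.
  rewrite mem_filter rL // andbT; apply/andP; split; first exact: tk.
  by have [m [-> vm _ _]] := Sm_spec k; rewrite in_pathset.
have rr : r k \in reqs by rewrite -memL rL.
move: tk; rewrite /trig /pending arrdl //=.
by move/negbFE.
Qed.

Lemma pend_dl k g : (k < n)%N -> g \in L -> pending (rdl (r k)) (sat k) g -> rdl (r k) <= rdl g.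
Proof.
move=> kn /idxL [j jn ->] /andP [_ nj].
case: (ltnP j k) => jk; last exact: dl_le.
by move: nj; rewrite I2 ?(ltnW kn).
Qed.

Lemma added k g : (k < n)%N -> trig k -> g \in L -> pending (rdl (r k)) (sat k) g ->
  rnode g \in Sm k -> rdl g \in sat k.+1.
Proof.
move=> kn tk gL pg gS; rewrite sat_step // tk mem_cat; apply/orP; right.
by apply/mapP; exists g => //; rewrite mem_filter pg gS.
Qed.

Lemma sat_new k x : (k < n)%N -> x \in sat k.+1 -> x \notin sat k ->
  trig k /\ exists2 g, g \in L & [/\ pending (rdl (r k)) (sat k) g, rnode g \in Sm k & x = rdl g].
Proof.
move=> kn; rewrite sat_step //; case: ifP => tk; last by move=> ->.
rewrite mem_cat => /orP [-> //|/mapP [g]]; rewrite mem_filter => /andP [/andP [pg gS] gL] -> _.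
by split => //; exists g.
Qed.

Lemma I1 k : (k <= n)%N -> forall g, g \in L -> rdl g \in sat k ->
  exists2 s, s \in sch k & satisfies s g.
Proof.
elim: k => [|k IH] kn g gL; first by rewrite /sat /st take0 in_nil.
case: (boolP (rdl g \in sat k)) => gk gk1.
  have [s si ss] := IH (ltnW kn) g gL gk.
  exists s => //; rewrite sch_step //; case: ifP => // _.
  by rewrite mem_rcons in_cons si orbT.
have [tk [g' g'L [pg' g'S e]]] := sat_new kn gk1 gk.
have gg' := dl_injL g'L gL (esym e); subst g'.
exists (Sm k, rdl (r k)); first by rewrite sch_step // tk mem_rcons mem_head.
rewrite /satisfies /= g'S /=.
move: (pg') => /andP [-> _] /=.
exact: pend_dl.
Qed.

Lemma sch_char k : (k <= n)%N ->
  sch k = [seq (Sm j, rdl (r j)) | j <- [seq j <- iota 0 k | trig j]].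
Proof.
elim: k => [|k IH] kn; first by rewrite /sch /st take0.
rewrite sch_step // -addn1 iotaD filter_cat map_cat -IH ?(ltnW kn) //= add0n.
by case: ifP => _; rewrite ?cats0 ?cats1.
Qed.

Lemma not_covered e b : (e < b)%N -> (b < n)%N -> trig e -> trig b ->
  rarr (r b) <= rdl (r e) -> rnode (r b) \notin Sm e.
Proof.
move=> eb bn te tb ab; apply/negP => inS.
have en : (e < n)%N by apply: ltn_trans eb bn.
have pb : pending (rdl (r e)) (sat e) (r b).
  rewrite /pending ab /=; apply/negP => /(sat_mono (ltnW eb) (ltnW bn)).
  by move: tb => /andP [_ /negP].
have := added en te (rL bn) pb inS.
move/(sat_mono eb (ltnW bn)); by move: tb => /andP [_ /negP].
Qed.

Lemma pair a b : (a < b)%N -> (b < n)%N -> trig a -> trig b -> rarr (r b) <= rdl (r a) ->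
  exists m : 'I_D, [/\ Sm a = pathset m, (rnode (r a) <= m)%N, (m < rnode (r b))%N,
    setcost c (pathset m) <= 2 * setcost c (pathset (rnode (r a))) &
    2 * setcost c (pathset (rnode (r a))) < setcost c (pathset (rnode (r b)))].
Proof.
move=> ab bn ta tb arr.
have an : (a < n)%N by apply: ltn_trans ab bn.
have [m [Sa am Cm Hm]] := Sm_spec a.
have mb : (m < rnode (r b))%N.
  by have := not_covered ab bn ta tb arr; rewrite Sa in_pathset -ltnNge.
exists m; split => //.
have pb : pending (rdl (r a)) (sat a) (r b).
  rewrite /pending arr /=; apply/negP => /(sat_mono (ltnW ab) (ltnW bn)).
  by move: tb => /andP [_ /negP].
have [g gL [pg mg Cg gb]] := Hm (r b) (rL bn) pb mb.
have [ci cn gci] := idxL gL.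
case: (ci =P b) => [cb|ncb]; first by rewrite -cb -gci.
have cib : (ci < b)%N.
  apply: dl_lt_idx => //; rewrite lt_neqAle -gci gb andbT.
  by apply/eqP; rewrite gci => /dl_eq => /(_ cn bn).
have nga : rdl g \notin sat a by move: pg => /andP [].
have aci : (a <= ci)%N.
  case: (leqP a ci) => // cia; move: nga; rewrite gci I2 ?(ltnW an) //.
have gin : rdl g \in sat ci.+1 by rewrite gci; apply: I2.
have [e [ae eci ne pe]] := find_step (P := fun e => rdl g \in sat e) (a := a) (N := ci.+1)
  (leqW aci) nga gin.
have en : (e < n)%N by apply: leq_ltn_trans (eci : (e <= ci)%N) cn.
have [te [g' g'L [pg' g'S eg]]] := sat_new en pe ne.
have gg' := dl_injL g'L gL (esym eg); subst g'.
have [me [Se _ _ _]] := Sm_spec e.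
have eb : (e < b)%N by apply: leq_ltn_trans (eci : (e <= ci)%N) cib.
have arr' : rarr (r b) <= rdl (r e) by apply: (le_trans arr); apply: dl_le => //.
have := not_covered eb bn te tb arr'.
move: g'S; rewrite Se !in_pathset => gme bme.
have gb' : (rnode g < rnode (r b))%N by apply: leq_ltn_trans gme _; rewrite ltnNge.
by apply: (lt_trans Cg); apply: C_lt.
Qed.


Lemma group (s : service D R) (G : pred nat) : rooted_subtree s.1 ->
  (forall k, (k < n)%N -> G k -> trig k /\ satisfies s (r k)) ->
  \sum_(0 <= k < n | G k) setcost c (Sm k) <= (4 - 2 `^ (1 - D%:R / 2)) * setcost c s.1.
Proof.
move=> rs hG.
pose x k := setcost c (pathset (rnode (r k))).
pose A N := \sum_(0 <= k < N | G k) setcost c (Sm k).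
have Astep N : A N.+1 = A N + (if G N then setcost c (Sm N) else 0).
  by rewrite /A big_mkcond big_nat_recr //= -big_mkcond.
have x0ge k : 0 <= x k by apply: setcost_ge0.
have claim : forall N, (N <= n)%N -> forall i, (N <= i)%N -> (i < n)%N -> G i ->
    A N <= (2 - gg R (rnode (r i))) * x i.
  elim => [|N IH] Nn i Ni iN Gi.
    rewrite /A big_geq //; apply: mulr_ge0 => //; rewrite subr_ge0; exact: gg_le2.
  rewrite Astep; case: ifP => GN; last first.
    by rewrite addr0; apply: IH => //; [exact: ltnW | exact: ltnW].
  have Nn' : (N < n)%N by [].
  have IHN := IH (ltnW Nn) N (leqnn N) Nn' GN.
  have [tN sN] := hG N Nn' GN.
  have [ti si] := hG i iN Gi.
  have arr : rarr (r i) <= rdl (r N).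
    move: si sN => /andP [_ /andP [ai _]] /andP [_ /andP [_ bN]]; exact: le_trans ai bN.
  have [m [SN Nm mi Cm Ci]] := pair Ni iN tN ti arr.
  rewrite SN.
  have xi2 : 2 * x N <= x i by apply: ltW.
  set g0 := gg R (rnode (r N)) in IHN *.
  set gi := gg R (rnode (r i)).
  have gi2 : gi <= 2 by apply: gg_le2.
  have g02 : g0 <= 2 by apply: gg_le2.
  have := x0ge N; have := x0ge i; rewrite -/(x N) -/(x i) => xige xNge.
  case: (eqVneq (m : nat) (rnode (r N))) => [Em|Em].
    have -> : m = rnode (r N) by apply: val_inj.
    rewrite -/(x N).
    have g1 : gi <= gg R (rnode (r N)).+1 by apply: gg_anti; rewrite -Em.
    have g1b := gg_S1 R (rnode (r N)); rewrite -/g0 in g1b.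
    have g1c : gg R (rnode (r N)).+1 <= 2 by apply: gg_le2.
    set G1 := gg R (rnode (r N)).+1 in g1 g1b g1c.
    have h1 : 0 <= (G1 - gi) * x i by apply: mulr_ge0; lra.
    have h2 : 0 <= (2 - G1) * (x i - 2 * x N) by apply: mulr_ge0; lra.
    have h3 : 0 <= (1 - 2 * G1 + g0) * x N by apply: mulr_ge0; lra.
    nra.
  have g2 : gi <= gg R (rnode (r N)).+2.
    apply: gg_anti; have : (rnode (r N) < m)%N by rewrite ltn_neqAle eq_sym Em Nm.
    move=> h; apply: leq_ltn_trans h mi.
  rewrite gg_S2 -/g0 in g2.
  have h1 : 0 <= (g0 / 2 - gi) * x i by apply: mulr_ge0; lra.
  have h2 : 0 <= (2 - g0 / 2) * (x i - 2 * x N) by apply: mulr_ge0; lra.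
  rewrite -/(x N) in Cm; nra.
have D0 : (0 < D)%N by apply: leq_ltn_trans (ltn_ord (rnode x0)).
have rho_ge (k : nat) : 4 - gg R (rnode (r k)) <= 4 - 2 `^ (1 - D%:R / 2).
  by rewrite lerD2l lerN2; apply: gg_bound.
have bound : forall N, (N <= n)%N -> A N <= (4 - 2 `^ (1 - D%:R / 2)) * setcost c s.1.
  have Cs := setcost_ge0 cpos s.1.
  have rg := rho_ge 0%N.
  have g2 := gg_le2 R (rnode (r 0)).
  elim => [|N IH] Nn.
    rewrite /A big_geq //; apply: mulr_ge0 => //; lra.
  rewrite Astep; case: ifP => GN; last by rewrite addr0; apply: IH; exact: ltnW.
  have Nn' : (N < n)%N by [].
  have IHN := claim N (ltnW Nn) N (leqnn N) Nn' GN.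
  have [tN sN] := hG N Nn' GN.
  have [m [SN Nm Cm _]] := Sm_spec N.
  rewrite SN.
  have xs : x N <= setcost c s.1.
    by apply: rooted_C => //; move: sN => /andP [].
  have rgN := rho_ge N.
  have gN2 := gg_le2 R (rnode (r N)).
  set gN := gg R (rnode (r N)) in IHN rgN gN2.
  set rho := 4 - 2 `^ (1 - D%:R / 2) in rgN *.
  have xNge := x0ge N.
  have h1 : 0 <= (rho - (4 - gN)) * x N by apply: mulr_ge0; lra.
  have h2 : 0 <= rho * (setcost c s.1 - x N) by apply: mulr_ge0; lra.
  rewrite -/(x N) in Cm; nra.
exact: bound.
Qed.


Lemma main_alg : feasible reqs (sch n) /\ forall opt, feasible reqs opt ->
  sched_cost c (sch n) <= (4 - 2 `^ (1 - D%:R / 2)) * sched_cost c opt.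
Proof.
split.
  split.
    move=> s; rewrite sch_char // => /mapP [j]; rewrite mem_filter mem_iota.
    move=> /andP [_ /andP [_ jn]] -> /=.
    by have [m [-> _ _ _]] := Sm_spec j; exact: rooted_pathset.
  move=> rho rr; have rhoL : rho \in L by rewrite memL.
  have [k kn ->] := idxL rhoL.
  apply: I1 => //; first exact: rL.
  exact: (sat_mono (kn : (k.+1 <= n)%N) (leqnn n) (I2 (kn : (k.+1 <= n)%N) (ltnSn k))).
move=> opt [optr opts].
rewrite sch_char // /sched_cost big_map big_filter /=.
have -> : iota 0 n = index_iota 0 n by rewrite /index_iota subn0.
pose f k := find (fun s => satisfies s (r k)) opt.
pose m := size opt.
have fm : forall k, (k < n)%N -> trig k -> (f k < m)%N.
  move=> k kn _; rewrite -has_find; apply/hasP.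
  have rk : r k \in reqs by rewrite -memL rL.
  have [s so ss] := opts (r k) rk.
  by exists s.
have part : \sum_(0 <= k < n | trig k) setcost c (Sm k) =
    \sum_(0 <= i < m) \sum_(0 <= k < n | trig k && (f k == i)) setcost c (Sm k).
  transitivity (\sum_(0 <= k < n | trig k) \sum_(0 <= i < m | f k == i) setcost c (Sm k)).
    rewrite big_nat_cond [RHS]big_nat_cond; apply: eq_bigr => k /andP [/andP [_ kn] tk].
    rewrite (eq_bigl (fun i => i == f k)); last by move=> i; rewrite eq_sym.
    by rewrite big_nat1_eq fm.
  by rewrite (exchange_big_dep_nat predT).
rewrite part (big_nth (set0, 0)) mulr_sumr.
rewrite big_nat_cond [X in _ <= X]big_nat_cond; apply: ler_sum => i /andP [/andP [_ im] _].
apply: (group (G := fun k => trig k && (f k == i))).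
  by apply: optr; apply: mem_nth.
move=> k kn /andP [tk /eqP fk]; split => //.
rewrite -fk /f; apply: (@nth_find _ (set0, 0) (fun s => satisfies s (r k))); rewrite has_find -/(f k) fk.
exact: im.
Qed.

End Alg.

Unset Implicit Arguments.

Theorem mainTheorem5 (R : realType) (D : nat) (hD : (0 < D)%N) :
  @competitive R D (@Double R D) (4 - 2 `^ (1 - D%:R / 2)).
Proof.
move=> c reqs [cpos [arrdl udl]].
pose x0 := @Request D R (Ordinal hD) 0 0.
have := @main_alg R D c reqs x0 cpos arrdl udl.
have -> : Double c reqs = sch c reqs (size (sortdl reqs)).
  by rewrite /Double /sch /st take_size.
by [].
Qed.
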